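(* Let $P$ be a probability measure on $(\Omega,\mathcal A)$ and $\delta\in(\tfrac12,1)$. Then the C-measure generated by the C-class $\bar T(P,\delta)=\{A\in\bar{\mathcal A}:\bar P(A)\ge\delta\}$ equals $\bar P$, i.e. $\bar M_{\bar T(P,\delta)}(A)=\bar P(A)$ for all $A\in\bar{\mathcal A}$.
   Context: Let $(\Omega,\mathcal A)$ be a measurable space. For $n\ge1$, $\mathcal A^n$ is the product $\sigma$-algebra on $\Omega^n$; the extended event space is $\bar{\mathcal A}=\bigcup_{n\ge1}\mathcal A^n$, events tagged by their level $n$ (written $A^{(n)}$). For $k\ge1$, $(\Omega^n)^k$ is identified with $\Omega^{nk}$ and $(\mathcal A^n)^k$ with $\mathcal A^{nk}$. For a probability measure $P$ on $\mathcal A$, $P^n$ is its $n$-fold product, and $\bar P(A^{(n)})=P^n(A^{(n)})$. For $A^{(n)}\in\mathcal A^n$, an interval $I\subseteq[0,1]$ and $k\in\mathbb N^+$, $S(A^{(n)},I,k)=\{(\omega_1,\dots,\omega_k)\in(\Omega^n)^k:\frac1k\sum_{i=1}^k\chi_{A^{(n)}}(\omega_i)\in I\}$. A class $\bar{\mathbf C}\subseteq\bar{\mathcal A}$ is a C-class if each component $\mathcal C^{(n)}=\bar{\mathbf C}\cap\mathcal A^n$ contains $\Omega^n$, is closed under supersets within $\mathcal A^n$, and contains no two disjoint events. ''$S(A,I,k)\in\bar{\mathbf C}$ definitively'' means there is $k_0$ with $S(A,I,k)\in\bar{\mathbf C}$ for all $k>k_0$. The C-measure of a C-class is $\bar M_{\bar{\mathbf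 C}}(A)=\sup\{\sigma\in[0,1]: S(A,[\sigma,1],k)\in\bar{\mathbf C}\text{ definitively}\}$. *)

(* Defs.v *)
From HB Require Import structures.
From mathcomp Require Import all_boot all_order all_algebra.
From mathcomp Require Import all_classical all_reals all_analysis.
Set Implicit Arguments.
Unset Strict Implicit.
Unset Printing Implicit Defensive.
Import Order.TTheory GRing.Theory Num.Theory.
Local Open Scope classical_set_scope.
Local Open Scope ring_scope.

(* Omega^n is represented as n.-tuple T, with the library's product
   sigma-algebra (generated by the coordinate maps).  An event of the
   extended event space at level n is a measurable A : set (n.-tuple T). *)

Lemma block_index_lt (n k : nat) (i : 'I_k) (j : 'I_n) : (i * n + j < n * k)%N.
Proof.
case: i j => i /= Hi [j /= Hj].
apply: (@leq_trans ((i.+1) * n)%N); first by rewrite mulSn addnC ltn_add2r.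
by rewrite mulnC leq_mul2l Hi orbT.
Qed.

(* Identification (Omega^n)^k = Omega^(n k): the i-th block (i < k) of a
   point of Omega^(n k) is the n-tuple of coordinates i*n, ..., i*n+n-1. *)
Definition block {T : Type} (n k : nat) (t : (n * k).-tuple T) (i : 'I_k)
  : n.-tuple T :=
  [tuple tnth t (Ordinal (block_index_lt i j)) | j < n].

Definition Sfreq {R : realType} {T : Type} (n : nat) (A : set (n.-tuple T))
  (I : set R) (k : nat) : set ((n * k).-tuple T) :=
  [set t | I (k%:R^-1 * \sum_(i < k) \1_A (block t i))].

Definition eclass (T : Type) := forall n : nat, set (set (n.-tuple T)).

Definition definitively_in {R : realType} {T : Type} (C : eclass T) (n : nat)
  (A : set (n.-tuple T)) (sigma : R) : Prop :=
  exists k0 : nat, forall k : nat, (k0 < k)%N ->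
    C (n * k)%N (@Sfreq R T n A `[sigma, 1]%classic k).

Definition C_measure {R : realType} {T : Type} (C : eclass T) (n : nat)
  (A : set (n.-tuple T)) : R :=
  sup [set sigma : R | 0 <= sigma <= 1 /\ definitively_in C A sigma].

(* P^n is the n-fold product of P: a probability on Omega^n (with the product
   sigma-algebra) that gives measurable rectangles the product of the
   marginal probabilities (this determines it uniquely). *)
Definition is_product_family {R : realType} {d : measure_display}
  {T : measurableType d} (P : probability T R)
  (Pn : forall n : nat, probability (n.-tuple T) R) : Prop :=
  forall (n : nat) (B : 'I_n -> set T), (forall i, measurable (B i)) ->
    Pn n [set t | forall i, B i (tnth t i)] = (\prod_(i < n) P (B i))%E.

Definition Tclass {R : realType} {d : measure_display} {T : measurableType d}
  (Pn : forall n : nat, probability (n.-tuple T) R) (delta : R) : eclass T :=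
  fun n A => measurable A /\ (delta%:E <= Pn n A)%E.

(* Main.v *)
Require Import Defs.
From HB Require Import structures.
From mathcomp Require Import all_boot all_order all_algebra.
From mathcomp Require Import all_classical all_reals all_analysis.
From mathcomp Require Import measurable_realfun.
From mathcomp Require Import ring lra.
Import Order.TTheory GRing.Theory Num.Theory.
Local Open Scope classical_set_scope.
Local Open Scope ring_scope.

Definition rect {T : Type} {n : nat} (B : 'I_n -> set T) : set (n.-tuple T) :=
  [set t | forall i, B i (tnth t i)].

Definition rects {d} {T : measurableType d} (n : nat) : set (set (n.-tuple T)) :=
  [set E | exists B : 'I_n -> set T, (forall i, measurable (B i)) /\ E = rect B].

Section gen.
Context {d} {T : measurableType d}.

Lemma rect_measurable n (B : 'I_n -> set T) : (forall i, measurable (B i)) ->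
  measurable (rect B).
Proof.
move=> mB.
have -> : rect B = \bigcap_(i in [set: 'I_n]) ((@tnth n T)^~ i @^-1` B i).
  by apply/seteqP; split => t Ht i; [move=> _|]; apply: Ht.
apply: fin_bigcap_measurable; first exact: finite_finset.
by move=> i _; rewrite -[X in measurable X]setTI; apply: measurable_tnth.
Qed.

Lemma rects_gen n : (measurable : set (set (n.-tuple T))) = <<s rects n >>.
Proof.
apply/seteqP; split.
- move=> X mX.
  apply: (smallest_sub _ _ mX).
    exact: smallest_sigma_algebra.
  move=> Y HY.
  have [i [Z mZ <-]] : exists i : 'I_n, preimage_set_system [set: n.-tuple T]
      ((@tnth n T)^~ i) measurable Y.
    move: HY; apply: (big_ind (fun S : set (set (n.-tuple T)) => S Y -> _)).
    - by [].
    - by move=> S1 S2 H1 H2 [/H1|/H2].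
    - by move=> i _ H; exists i.
  apply: sub_sigma_algebra.
  exists (fun j => if j == i then Z else setT); split.
    by move=> j; case: eqP.
  apply/seteqP; split => t /=.
    by move=> [_ Ht] j; case: eqP => // ->.
  by move=> Ht; split => //; have := Ht i; rewrite eqxx.
- apply: smallest_sub; first exact: sigma_algebra_measurable.
  by move=> E [B [mB ->]]; exact: rect_measurable.
Qed.
End gen.

Section ext.
Context {d} {T : measurableType d} {R : realType}.
Local Open Scope ereal_scope.

Lemma prob_fin {d'} {X : measurableType d'} (mu : probability X R) (C : set X) :
  measurable C -> mu C = (fine (mu C))%:E.
Proof. by move=> mC; rewrite fineK // fin_num_measure. Qed.

Lemma ext_rect {d'} {X : measurableType d'} n (mu : probability X R)
  (Q : probability (n.-tuple T) R) (C : set X) (f : X -> n.-tuple T) :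
  measurable C -> measurable_fun setT f ->
  (forall B, (forall i, measurable (B i)) ->
     mu (f @^-1` rect B `&` C) = mu C * Q (rect B)) ->
  forall E, measurable E -> mu (f @^-1` E `&` C) = mu C * Q E.
Proof.
move=> mC mf H E mE.
have c0 : (0 <= fine (mu C))%R by rewrite fine_ge0.
pose m1 := pushforward (mrestr mu mC) f.
pose m2 := mscale (NngNum c0) Q.
have -> : mu C * Q E = m2 E by rewrite [in LHS](prob_fin mu C mC).
have -> : mu (f @^-1` E `&` C) = m1 E by [].
apply: (measure_unique (rects n) (fun _ => setT)) => //.
- exact: rects_gen.
- move=> _ _ [B [mB ->]] [B' [mB' ->]]; exists (fun i => B i `&` B' i); split.
    by move=> i; exact: measurableI.
  by apply/seteqP; split => t /=; [move=> [H1 H2] i; split|move=> H1; split => i; case: (H1 i)].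
- move=> _; exists (fun _ => setT); split => //.
  by apply/seteqP; split.
- by rewrite bigcup_const.
- move=> _ [B [mB ->]]; transitivity (mu C * Q (rect B)); last by rewrite [in LHS](prob_fin mu C mC).
  exact: H.
- move=> _; rewrite /pushforward /mrestr /=.
  apply: (le_lt_trans (probability_le1 _ _)); last exact: ltry.
  apply: measurableI => //; rewrite -[X in measurable X]setTI; exact: mf.
Qed.

Lemma ext_rectT {d'} {X : measurableType d'} n (mu : probability X R)
  (Q : probability (n.-tuple T) R) (f : X -> n.-tuple T) :
  measurable_fun setT f ->
  (forall B, (forall i, measurable (B i)) -> mu (f @^-1` rect B) = Q (rect B)) ->
  forall E, measurable E -> mu (f @^-1` E) = Q E.
Proof.
move=> mf H E mE.
have P1 : mu setT = 1 by exact: probability_setT.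
have H2 : forall B, (forall i, measurable (B i)) ->
    mu (f @^-1` rect B `&` setT) = mu setT * Q (rect B).
  by move=> B mB; rewrite setIT P1 mul1e; exact: H.
have := @ext_rect _ _ n mu Q setT f measurableT mf H2 E mE.
by rewrite setIT P1 mul1e.
Qed.
End ext.

Definition liftB {T : Type} {n m : nat} (s : 'I_n -> 'I_m) (B : 'I_n -> set T)
  (l : 'I_m) : set T :=
  if [pick j | s j == l] is Some j then B j else setT.

Lemma liftB_img {T : Type} {n m : nat} (s : 'I_n -> 'I_m) (B : 'I_n -> set T) j :
  injective s -> liftB s B (s j) = B j.
Proof.
move=> inj; rewrite /liftB; case: pickP => [j' /eqP /inj -> //|].
by move=> /(_ j); rewrite eqxx.
Qed.

Lemma liftB_notimg {T : Type} {n m : nat} (s : 'I_n -> 'I_m) (B : 'I_n -> set T) l :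
  l \notin [set s j | j in [set: 'I_n]]%SET -> liftB s B l = setT.
Proof.
move=> Hl; rewrite /liftB; case: pickP => [j /eqP Hj|//].
by case/negP: Hl; apply/imsetP; exists j => //; rewrite inE.
Qed.

Lemma liftB_measurable {d} {T : measurableType d} {n m : nat} (s : 'I_n -> 'I_m)
  (B : 'I_n -> set T) l : (forall j, measurable (B j)) -> measurable (liftB s B l).
Proof. by move=> mB; rewrite /liftB; case: pickP. Qed.

Lemma rect_liftB {T : Type} {n m : nat} (s : 'I_n -> 'I_m) (B : 'I_n -> set T)
  (t : m.-tuple T) : injective s ->
  rect (liftB s B) t <-> (forall j, B j (tnth t (s j))).
Proof.
move=> inj; split => H.
  by move=> j; have := H (s j); rewrite liftB_img.
by move=> l; rewrite /liftB; case: pickP => // j /eqP <-.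
Qed.

Definition sig_b {n k : nat} (i : 'I_k) (j : 'I_n) : 'I_(n * k) :=
  Ordinal (block_index_lt i j).

Lemma tnth_block {T : Type} n k (t : (n * k).-tuple T) i j :
  tnth (block t i) j = tnth t (sig_b i j).
Proof. by rewrite /block tnth_mktuple. Qed.

Lemma sig_b_inj (n k : nat) (i : 'I_k) : injective (@sig_b n k i).
Proof.
by move=> j j' /(congr1 val) /= /addnI /val_inj.
Qed.

Lemma sig_b_disj n k (i i' : 'I_k) j j' : (0 < n)%N ->
  @sig_b n k i j = sig_b i' j' -> i = i'.
Proof.
move=> n0 /(congr1 val) /= /(congr1 (fun x => x %/ n)%N).
rewrite !divnMDl // !divn_small ?ltn_ord // !addn0 => H.
exact: val_inj.
Qed.

Section prod.
Local Open Scope ereal_scope.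
Context {R : realType}.

Lemma prod_split m (F G : 'I_m -> \bar R) (S : {set 'I_m}) :
  (forall l, l \in S -> G l = 1) -> (forall l, l \notin S -> F l = G l) ->
  \prod_(l < m) F l = (\prod_(l in S) F l) * \prod_(l < m) G l.
Proof.
move=> HG HF.
rewrite (bigID (mem S) predT F) (bigID (mem S) predT G) /=.
rewrite [X in _ = _ * (X * _)]big1 ?mul1e; last by move=> l /HG.
by congr (_ * _); apply: eq_bigr => l /HF.
Qed.

Lemma prod_img m n (F : 'I_m -> \bar R) (s : 'I_n -> 'I_m) :
  injective s ->
  \prod_(l in [set s j | j in [set: 'I_n]]%SET) F l = \prod_(j < n) F (s j).
Proof.
move=> inj; rewrite big_imset /=; last by move=> x y _ _; exact: inj.
by apply: eq_bigl => j; rewrite inE.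
Qed.
End prod.

Section blocks.
Local Open Scope ereal_scope.
Context {R : realType} {d : measure_display} {T : measurableType d}
  (P : probability T R) (Pn : forall n : nat, probability (n.-tuple T) R)
  (hPn : is_product_family P Pn) (n k : nat) (n0 : (0 < n)%N).

Let fb (i : 'I_k) := fun t : (n * k).-tuple T => block t i.

Lemma Pn_rect m (F : 'I_m -> set T) : (forall l, measurable (F l)) ->
  Pn m (rect F) = \prod_(l < m) P (F l).
Proof. exact: hPn. Qed.

Lemma block_measurable i : measurable_fun setT (fb i).
Proof.
apply/measurable_fun_tnthP => j.
have -> : (tnth (T:=T))^~ j \o fb i = (tnth (T:=T))^~ (sig_b i j).
  by apply/funext => t /=; rewrite /fb tnth_block.
exact: measurable_tnth.
Qed.

Lemma pre_block_meas i E : measurable E -> measurable (fb i @^-1` E).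
Proof.
by move=> mE; rewrite -[X in measurable X]setTI; apply: block_measurable.
Qed.

Lemma pre_block_rect i B : fb i @^-1` rect B = rect (liftB (sig_b i) B).
Proof.
apply/seteqP; split => t /=.
  by move=> H; apply/rect_liftB; [exact: sig_b_inj|move=> j; rewrite -tnth_block; exact: H].
by move=> /rect_liftB H j; rewrite /fb tnth_block; apply: H; exact: sig_b_inj.
Qed.

Lemma prod_liftB i B : (forall j, measurable (B j)) ->
  \prod_(l < n * k) P (liftB (sig_b i) B l) = \prod_(j < n) P (B j).
Proof.
move=> mB.
rewrite (@prod_split _ _ _ (fun _ => 1) [set sig_b i j | j in [set: 'I_n]]%SET) //.
- rewrite big1_eq mule1 prod_img; last exact: sig_b_inj.
  by apply: eq_bigr => j _; rewrite liftB_img //; exact: sig_b_inj.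
- by move=> l Hl; rewrite liftB_notimg //; exact: probability_setT.
Qed.

Lemma marg i E : measurable E -> Pn (n * k) (fb i @^-1` E) = Pn n E.
Proof.
move=> mE.
apply: ext_rectT => //; first exact: block_measurable.
move=> B mB; rewrite pre_block_rect.
rewrite Pn_rect; last by move=> l; exact: liftB_measurable.
by rewrite Pn_rect // prod_liftB.
Qed.

Lemma pair_rect i i' B B' : i != i' ->
  (forall j, measurable (B j)) -> (forall j, measurable (B' j)) ->
  Pn (n * k) (fb i @^-1` rect B `&` fb i' @^-1` rect B') =
  Pn n (rect B) * Pn n (rect B').
Proof.
move=> ii' mB mB'.
rewrite !pre_block_rect.
have -> : rect (liftB (sig_b i) B) `&` rect (liftB (sig_b i') B') =
    rect (fun l => liftB (sig_b i) B l `&` liftB (sig_b i') B' l).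
  by apply/seteqP; split => t /=; [move=> [H1 H2] l; split|move=> H; split => l; case: (H l)].
have notimg j : sig_b i j \notin [set sig_b i' j0 | j0 in [set: 'I_n]]%SET.
  apply/negP => /imsetP [j0 _ /sig_b_disj] => /(_ n0) Hi.
  by move/eqP: ii'.
rewrite (Pn_rect _ _ mB) (Pn_rect _ _ mB') Pn_rect; last by move=> l; apply: measurableI; exact: liftB_measurable.
rewrite (@prod_split _ _ _ (fun l => P (liftB (sig_b i') B' l))
  [set sig_b i j | j in [set: 'I_n]]%SET).
- rewrite prod_liftB // prod_img; last exact: sig_b_inj.
  congr (_ * _); apply: eq_bigr => j _.
  by rewrite liftB_img; [rewrite liftB_notimg ?setIT|exact: sig_b_inj].
- move=> l /imsetP [j _ ->].
  by rewrite liftB_notimg // probability_setT.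
- by move=> l Hl; rewrite liftB_notimg // setTI.
Qed.

Lemma indep i i' (A : set (n.-tuple T)) : i != i' -> measurable A ->
  Pn (n * k) (fb i @^-1` A `&` fb i' @^-1` A) = Pn n A * Pn n A.
Proof.
move=> ii' mA.
have step1 : forall B, (forall j, measurable (B j)) ->
    Pn (n * k) (fb i' @^-1` rect B `&` fb i @^-1` A) =
    Pn (n * k) (fb i @^-1` A) * Pn n (rect B).
  move=> B mB.
  have := @ext_rect _ T R _ _ n (Pn (n * k)) (Pn n) (fb i' @^-1` rect B) (fb i)
    (pre_block_meas _ _ (rect_measurable _ _ mB)) (block_measurable i) _ A mA.
  rewrite setIC => ->; last first.
    move=> B' mB'; rewrite pair_rect // (marg i' (rect B)); last exact: rect_measurable.
    by rewrite muleC.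
  rewrite (marg i' (rect B)); last exact: rect_measurable.
  by rewrite (marg i A) // muleC.
have := @ext_rect _ T R _ _ n (Pn (n * k)) (Pn n) (fb i @^-1` A) (fb i')
    (pre_block_meas _ _ mA) (block_measurable i') step1 A mA.
by rewrite setIC => ->; rewrite (marg i A).
Qed.
End blocks.

Section cheb.
Context {R : realType} {d : measure_display} {T : measurableType d}
  (P : probability T R) (Pn : forall n : nat, probability (n.-tuple T) R)
  (hPn : is_product_family P Pn) (n k : nat) (n0 : (0 < n)%N)
  (A : set (n.-tuple T)) (mA : measurable A).

Let mu := Pn (n * k).
Let X (i : 'I_k) := (fun t : (n * k).-tuple T => block t i) @^-1` A.
Let Nf (t : (n * k).-tuple T) : R := \sum_(i < k) \1_A (block t i).

Let mX i : measurable (X i).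
Proof. exact: pre_block_meas. Qed.

Let mind i : measurable_fun setT (fun t : (n * k).-tuple T => \1_A (block t i) : R).
Proof. exact: (measurable_indic (mX i)). Qed.

Let mN : measurable_fun setT Nf.
Proof. by apply: measurable_sum => i; exact: mind. Qed.

Let ind_ge0 (i : 'I_k) (t : (n * k).-tuple T) : 0 <= \1_A (block t i) :> R.
Proof. by rewrite /indic. Qed.

Let N_ge0 t : 0 <= Nf t.
Proof. by apply: sumr_ge0 => i _. Qed.

Local Open Scope ereal_scope.

Lemma int_N : \int[mu]_t (Nf t)%:E = \sum_(i < k) mu (X i).
Proof.
under eq_integral do rewrite /Nf -sumEFin.
rewrite ge0_integral_sum //.
- apply: eq_bigr => i _.
  have -> : (fun t => (\1_A (block t i))%:E) = (fun t => (\1_(X i) t)%:E) by [].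
  by rewrite integral_indic // setIT.
by move=> i; apply/measurable_EFinP; exact: mind.
Qed.

Lemma int_N2 : \int[mu]_t ((Nf t) ^+ 2)%:E =
  \sum_(i < k) \sum_(j < k) mu (X i `&` X j).
Proof.
have E t : (Nf t ^+ 2)%:E = \sum_(p : 'I_k * 'I_k) (\1_(X p.1 `&` X p.2) t)%:E.
  rewrite sumEFin -(pair_bigA _ (fun i j => \1_(X i `&` X j) t : R)) /= expr2 /Nf mulr_suml; congr (_%:E).
  apply: eq_bigr => i _; rewrite mulr_sumr; apply: eq_bigr => j _.
  by rewrite indicI.
under eq_integral do rewrite E.
rewrite ge0_integral_sum //.
- rewrite pair_bigA /=; apply: eq_bigr => p _.
  by rewrite integral_indic ?setIT //; exact: measurableI.
move=> p; apply/measurable_EFinP; apply: measurable_indic.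
exact: measurableI.
Qed.

Let p := fine (Pn n A).
Let hp : Pn n A = p%:E.
Proof. by rewrite fineK // fin_num_measure. Qed.

Lemma p_01 : (0 <= p <= 1)%R.
Proof.
apply/andP; split; first by rewrite fine_ge0.
by rewrite -lee_fin -hp probability_le1.
Qed.

Let PX i : mu (X i) = p%:E.
Proof. by rewrite -hp /mu /X (marg _ _ hPn). Qed.

Let PXX i j : mu (X i `&` X j) = (if i == j then p else p * p)%:E.
Proof.
case: eqP => [<-|/eqP ij]; first by rewrite setIid PX.
by rewrite /mu /X (indep _ _ hPn _ _ n0) // hp EFinM.
Qed.

Lemma int_N_val : \int[mu]_t (Nf t)%:E = (k%:R * p)%:E.
Proof.
rewrite int_N (eq_bigr (fun _ => p%:E)); last by move=> i _; exact: PX.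
by rewrite sumEFin sumr_const card_ord mulr_natl.
Qed.

Lemma S_val : (\sum_(i < k) \sum_(j < k) (if i == j then p else p * p) =
  k%:R * k%:R * (p * p) + k%:R * (p - p * p))%R.
Proof.
have E i : (\sum_(j < k) (if i == j then p else p * p) =
    k%:R * (p * p) + (p - p * p))%R.
  rewrite (bigD1 i) //= eqxx (eq_bigr (fun _ => p * p)%R); last first.
    by move=> j /negbTE; rewrite eq_sym => ->.
  rewrite sumr_const cardC1 card_ord.
  case: k i => [[]//|k'] i /=.
  by rewrite mulrSr -mulr_natl; ring.
rewrite (eq_bigr _ (fun i _ => E i)) sumr_const card_ord -mulr_natl; ring.
Qed.

Lemma int_N2_val : \int[mu]_t ((Nf t) ^+ 2)%:E =
  (k%:R * k%:R * (p * p) + k%:R * (p - p * p))%:E.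
Proof.
rewrite int_N2 -S_val -sumEFin; apply: eq_bigr => i _.
by rewrite -sumEFin; apply: eq_bigr => j _; exact: PXX.
Qed.

Let intD (f g : (n * k).-tuple T -> R) :
  (forall t, 0 <= f t)%R -> (forall t, 0 <= g t)%R ->
  measurable_fun setT f -> measurable_fun setT g ->
  \int[mu]_t (f t + g t)%:E = \int[mu]_t (f t)%:E + \int[mu]_t (g t)%:E.
Proof.
move=> f0 g0 mf mg; under eq_integral do rewrite EFinD.
apply: ge0_integralD => //.
- by move=> t _; rewrite lee_fin.
- exact/measurable_EFinP.
- by move=> t _; rewrite lee_fin.
- exact/measurable_EFinP.
Qed.

Let intZ (f : (n * k).-tuple T -> R) (a : R) :
  (0 <= a)%R -> (forall t, 0 <= f t)%R -> measurable_fun setT f ->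
  \int[mu]_t (a * f t)%:E = a%:E * \int[mu]_t (f t)%:E.
Proof.
move=> a0 f0 mf; under eq_integral do rewrite EFinM.
apply: ge0_integralZl => //.
- exact/measurable_EFinP.
- by move=> t _; rewrite lee_fin.
Qed.

Lemma cheb_bound (W : set ((n * k).-tuple T)) (e : R) : measurable W ->
  (0 < e)%R -> (forall t, W t -> (e * k%:R <= `|Nf t - k%:R * p|)%R) ->
  ((e * k%:R) ^+ 2 * fine (mu W) <= k%:R)%R.
Proof.
move=> mW e0 HW.
have [p0 p1] := andP p_01.
set c := ((e * k%:R) ^+ 2)%R.
set q := (k%:R * p)%R.
have c0 : (0 <= c)%R by rewrite /c sqr_ge0.
have k0 : (0 <= k%:R :> R)%R by [].
have q0 : (0 <= q)%R by rewrite /q mulr_ge0.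
have pw t : (c * \1_W t + 2 * q * Nf t <= Nf t ^+ 2 + q ^+ 2)%R.
  have : (c * \1_W t <= (Nf t - q) ^+ 2)%R.
    rewrite /indic; case: (boolP (t \in W)) => [/set_mem Wt|_].
      rewrite mulr1 -(@real_normK _ (Nf t - q)) ?num_real // /c.
      have h := HW t Wt.
      have ek0 : (0 <= e * k%:R)%R by rewrite mulr_ge0 // ltW.
      rewrite -/q in h.
      nra.
    by rewrite mulr0 sqr_ge0.
  move=> h; nra.
have mIW : measurable_fun setT (\1_W : _ -> R) by exact: measurable_indic.
have L : \int[mu]_t ((c * \1_W t + 2 * q * Nf t)%:E) =
    (c * fine (mu W) + 2 * q * q)%:E.
  rewrite intD; first last.
  - by apply: measurable_funM => //; exact: measurable_cst.
  - by apply: measurable_funM => //; exact: measurable_cst.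
  - by move=> t; rewrite mulr_ge0 // mulr_ge0.
  - by move=> t; rewrite mulr_ge0 // /indic.
  have i0 t : (0 <= \1_W t :> R)%R by rewrite /indic.
  rewrite (intZ _ _ c0 i0 mIW) intZ ?mulr_ge0 //.
  rewrite int_N_val integral_indic // setIT -/q.
  by rewrite EFinD !EFinM -(prob_fin mu W mW).
have P1 : mu setT = 1 by exact: probability_setT.
have Rr : \int[mu]_t ((Nf t ^+ 2 + q ^+ 2)%:E) =
    (k%:R * k%:R * (p * p) + k%:R * (p - p * p) + q ^+ 2)%:E.
  rewrite intD; first last.
  - exact: measurable_cst.
  - exact: measurable_funX.
  - by move=> t; rewrite sqr_ge0.
  - by move=> t; rewrite sqr_ge0.
  rewrite int_N2_val.
  have -> : \int[mu]_t (q ^+ 2)%:E = (q ^+ 2)%:E * mu setT.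
    exact: (integral_cst mu measurableT).
  by rewrite P1 mule1 -EFinD.
have := @ge0_le_integral _ _ _ mu setT measurableT
  (fun t => (c * \1_W t + 2 * q * Nf t)%:E) (fun t => (Nf t ^+ 2 + q ^+ 2)%:E).
rewrite L Rr lee_fin; move=> H.
have {}H : (c * fine (mu W) + 2 * q * q <=
    k%:R * k%:R * (p * p) + k%:R * (p - p * p) + q ^+ 2)%R.
  apply: H.
  - by move=> t _; rewrite lee_fin addr_ge0 // mulr_ge0 // ?mulr_ge0 // /indic.
  - apply/measurable_EFinP; apply: measurable_funD.
      by apply: measurable_funM => //; exact: measurable_cst.
    by apply: measurable_funM => //; exact: measurable_cst.
  - apply/measurable_EFinP; apply: measurable_funD.
      exact: measurable_funX.
    exact: measurable_cst.
  - by move=> t _; rewrite lee_fin.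
rewrite /q in H.
nra.
Qed.
End cheb.

Lemma arith_bound {R : realType} (e x w kr : R) :
  0 < e -> 0 < x -> 0 < kr -> (x * e ^+ 2)^-1 < kr ->
  (e * kr) ^+ 2 * w <= kr -> w < x.
Proof.
move=> e0 x0 k0 hk hw.
have xe0 : 0 < x * e ^+ 2 by rewrite mulr_gt0 // exprn_gt0.
have h1 : 1 < kr * (x * e ^+ 2).
  by rewrite -ltr_pdivrMr // div1r.
have h2 : e ^+ 2 * kr * w <= 1.
  have : kr * (e ^+ 2 * kr * w) <= kr * 1.
    by rewrite mulr1; apply: le_trans hw; rewrite le_eqVlt; apply/orP; left; apply/eqP; ring.
  by rewrite ler_pM2l.
have e20 : 0 < e ^+ 2 * kr by rewrite mulr_gt0 // exprn_gt0.
rewrite -(ltr_pM2l e20); apply: (le_lt_trans h2).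
by apply: (lt_le_trans h1); rewrite le_eqVlt; apply/orP; left; apply/eqP; ring.
Qed.

Section final.
Context {R : realType} {d : measure_display} {T : measurableType d}
  (P : probability T R) (Pn : forall n : nat, probability (n.-tuple T) R)
  (hPn : is_product_family P Pn) (n : nat) (n0 : (0 < n)%N)
  (A : set (n.-tuple T)) (mA : measurable A).

Let Nf {k} (t : (n * k).-tuple T) : R := \sum_(i < k) \1_A (block t i).
Let g {k} (t : (n * k).-tuple T) : R := k%:R^-1 * Nf t.

Let Nf_ge0 k t : 0 <= Nf (k:=k) t.
Proof. by apply: sumr_ge0 => i _; rewrite /indic. Qed.

Let Nf_lek k t : Nf (k:=k) t <= k%:R.
Proof.
rewrite /Nf -[k in k%:R]card_ord -sumr_const.
by apply: ler_sum => i _; rewrite /indic; case: (_ \in _).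
Qed.

Let g_01 k t : 0 <= g (k:=k) t <= 1.
Proof.
apply/andP; split; first by rewrite /g mulr_ge0 // invr_ge0.
case: k t => [|k] t; first by rewrite /g invr0 mul0r.
by rewrite /g ler_pdivrMl // mulr1.
Qed.

Let mg k : measurable_fun setT (g (k:=k)).
Proof.
apply: measurable_funM; first exact: measurable_cst.
apply: measurable_sum => i; apply: measurable_indic.
exact: pre_block_meas.
Qed.

Let pre_meas k (I : interval R) : measurable (g (k:=k) @^-1` [set` I]).
Proof.
by rewrite -[X in measurable X]setTI; apply: mg => //; exact: measurable_itv.
Qed.

Let Sfreq_g k s : @Sfreq R T n A `[s, 1]%classic k = g (k:=k) @^-1` [set` `[s, 1]].
Proof. by []. Qed.

Let p := fine (Pn n A).

Lemma S0 (delta : R) : delta < 1 -> definitively_in (Tclass Pn delta) A (0 : R).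
Proof.
move=> d1; exists 0%N => k _.
rewrite Sfreq_g.
have -> : g (k:=k) @^-1` [set` `[0, 1]] = setT.
  by apply/seteqP; split => t //= _; rewrite in_itv /= g_01.
split => //.
have -> : Pn (n * k) setT = 1%E by exact: probability_setT.
by rewrite lee_fin ltW.
Qed.

Lemma S_lt (delta : R) (d1 : delta < 1) (s : R) : 0 <= s -> s < p ->
  definitively_in (Tclass Pn delta) A s.
Proof.
move=> s0 sp.
have e0 : 0 < p - s by rewrite subr_gt0.
have x0 : 0 < 1 - delta by rewrite subr_gt0.
exists (Num.trunc (((1 - delta) * (p - s) ^+ 2)^-1)) => k hk.
have k0 : (0 < k)%N by apply: leq_ltn_trans hk.
have hkr : ((1 - delta) * (p - s) ^+ 2)^-1 < k%:R.
  by apply: (lt_le_trans (truncnS_gt _)); rewrite ler_nat.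
rewrite Sfreq_g; split; first exact: pre_meas.
set W := g (k:=k) @^-1` [set` `]-oo, s[].
have mW : measurable W by exact: pre_meas.
have -> : g (k:=k) @^-1` [set` `[s, 1]] = ~` W.
  apply/seteqP; split => t /=; rewrite !in_itv /=.
    by move=> /andP [st _]; rewrite /W /= in_itv /= ltNge st.
  rewrite /W /= in_itv /= => /negP; rewrite -leNgt => st.
  by rewrite st /=; case/andP: (g_01 _ t).
rewrite probability_setC // (prob_fin _ W mW) -EFinB lee_fin.
have hb := @cheb_bound _ _ _ P Pn hPn n k n0 A mA W (p - s) mW e0.
have kr0 : 0 < k%:R :> R by rewrite ltr0n.
have HW : forall t, W t -> (p - s) * k%:R <=
    `|\sum_(i < k) \1_A (block t i) - k%:R * fine (Pn n A)|.
  move=> t; rewrite /W /= in_itv /= /g => gs.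
  rewrite ltr_pdivrMl // in gs.
  rewrite ler_normr; apply/orP; right.
  rewrite -/p; rewrite /Nf in gs; nra.
have := @arith_bound _ _ _ _ _ e0 x0 kr0 hkr (hb HW).
by move=> H; rewrite lerBrDl -lerBrDr; apply: ltW; lra.
Qed.

Lemma S_le (delta : R) (d0 : 0 < delta) (s : R) :
  definitively_in (Tclass Pn delta) A s -> s <= p.
Proof.
move=> [k0 Hk]; rewrite leNgt; apply/negP => ps.
have e0 : 0 < s - p by rewrite subr_gt0.
pose k := (maxn k0 (Num.trunc ((delta * (s - p) ^+ 2)^-1))).+1.
have hk : (k0 < k)%N by rewrite ltnS leq_maxl.
have k0' : (0 < k)%N by [].
have hkr : (delta * (s - p) ^+ 2)^-1 < k%:R.
  by apply: (lt_le_trans (truncnS_gt _)); rewrite ler_nat ltnS leq_maxr.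
have [mW HW] := Hk k hk.
move: mW HW; rewrite Sfreq_g => mW HW.
set W := g (k:=k) @^-1` [set` `[s, 1]] in mW HW.
have hb := @cheb_bound _ _ _ P Pn hPn n k n0 A mA W (s - p) mW e0.
have kr0 : 0 < k%:R :> R by rewrite ltr0n.
have HW2 : forall t, W t -> (s - p) * k%:R <=
    `|\sum_(i < k) \1_A (block t i) - k%:R * fine (Pn n A)|.
  move=> t; rewrite /W /= in_itv /= /g => /andP [gs _].
  rewrite ler_pdivlMl // in gs.
  rewrite ler_normr; apply/orP; left.
  rewrite -/p; rewrite /Nf in gs; nra.
have := @arith_bound _ _ _ _ _ e0 d0 kr0 hkr (hb HW2).
move: HW; rewrite (prob_fin _ W mW) lee_fin => H1 H2.
by have := le_lt_trans H1 H2; rewrite ltxx.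
Qed.
End final.

Theorem mainTheorem4 (R : realType) (d : measure_display) (T : measurableType d)
  (P : probability T R) (Pn : forall n : nat, probability (n.-tuple T) R)
  (hPn : is_product_family P Pn) (delta : R) (hdelta : 2^-1 < delta < 1) :
  forall (n : nat) (A : set (n.-tuple T)), (0 < n)%N -> measurable A ->
    (C_measure (Tclass Pn delta) A)%:E = Pn n A.
Proof.
move=> n A n0 mA.
have /andP [hd1 hd2] := hdelta.
have d0 : 0 < delta by apply: lt_trans hd1; rewrite invr_gt0.
have [p0 p1] := andP (@p_01 _ _ _ Pn n A mA).
rewrite (prob_fin _ A mA); congr (_%:E).
rewrite /C_measure.
set S := [set sigma : R | _].
have S0' : S 0 by split; [rewrite lexx ler01|exact: (@S0 _ _ _ Pn n A delta hd2)].
have ub : ubound S (fine (Pn n A)).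
  by move=> s [_ Hs]; exact: (@S_le _ _ _ P Pn hPn n n0 A mA delta d0 s Hs).
have hsup : has_sup S by split; [exists 0|exists (fine (Pn n A))].
apply/eqP; rewrite eq_le; apply/andP; split.
  by apply: ge_sup => //; exists 0.
rewrite leNgt; apply/negP => hs.
have sup0 : 0 <= sup S by exact: sup_upper_bound.
pose s := (sup S + fine (Pn n A)) / 2.
have Ss : S s.
  split.
    apply/andP; split; rewrite /s; lra.
  apply: (@S_lt _ _ _ P Pn hPn n n0 A mA delta hd2 s); rewrite /s; lra.
have := sup_upper_bound hsup Ss.
rewrite /s; lra.
Qed.
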